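(* Let $t$ be a positive integer and let $G$ be a graph on $n$ vertices. Suppose that $|E(G)|>\left(1-\frac{1}{t+1}\right)(t-1)n$ if $t$ is odd, and $|E(G)|>\left(1-\frac{1}{t}\right)(t-1)n$ if $t$ is even. Then $G$ contains (as a subgraph) every tree $T$ having $t$ edges. *)

(* Defs.v *)
From HB Require Import structures.
From mathcomp Require Import all_boot all_order all_algebra.
Set Implicit Arguments. Unset Strict Implicit. Unset Printing Implicit Defensive.

Definition simple_graph (V : finType) (e : rel V) : Prop :=
  symmetric e /\ irreflexive e.

Definition edge_set (V : finType) (e : rel V) : {set {set V}} :=
  [set A : {set V} | [exists x : V, exists y : V,
     [&& x != y, e x y & A == [set x; y]]]].

Definition nedges (V : finType) (e : rel V) : nat := #|edge_set e|.

Definition connected_graph (V : finType) (e : rel V) : Prop :=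
  forall x y : V, connect e x y.

Definition acyclic_graph (V : finType) (e : rel V) : Prop :=
  ~ (exists c : seq V, [&& uniq c, 2 < size c & cycle e c]).

Definition is_tree (V : finType) (e : rel V) : Prop :=
  [/\ simple_graph e, 0 < #|V|, connected_graph e & acyclic_graph e].

Definition contains_subgraph (V : finType) (eG : rel V)
    (U : finType) (eH : rel U) : Prop :=
  exists f : U -> V, injective f /\ (forall x y, eH x y -> eG (f x) (f y)).

(* Main.v *)
Require Import Defs.
From HB Require Import structures.
From mathcomp Require Import all_boot all_order all_algebra.
From mathcomp Require Import ring lra zify.
Import Order.TTheory GRing.Theory Num.Theory.
Set Implicit Arguments. Unset Strict Implicit. Unset Printing Implicit Defensive.

Definition eS (U : finType) (eT : rel U) (S : {set U}) : rel U :=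
  [rel x y | [&& x \in S, y \in S & eT x y]].

Definition connS (U : finType) (eT : rel U) (S : {set U}) : Prop :=
  forall x y, x \in S -> y \in S -> connect (eS eT S) x y.

Lemma frontier (U : finType) (eT : rel U) (A : {set U}) r x :
  r \in A -> x \notin A -> connect eT r x ->
  exists y z, [/\ y \in A, z \notin A & eT y z].
Proof.
move=> rA xA /connectP [p]; elim: p r rA => [|z p IH] r rA /=.
  by move=> _ xr; rewrite xr rA in xA.
case/andP=> erz pz xl.
case: (boolP (z \in A)) => zA.
  exact: IH zA pz xl.
by exists r, z.
Qed.

Lemma path_eS_all (U : finType) (eT : rel U) (S : {set U}) x p :
  path (eS eT S) x p -> all (mem S) p.
Proof.
elim: p x => //= y p IH x /andP[/and3P[_ yS _] /IH ->]; by rewrite yS.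
Qed.

Lemma uniq_parent (U : finType) (eT : rel U) (S : {set U}) u s1 s2 :
  symmetric eT -> acyclic_graph eT -> connS eT S ->
  u \notin S -> s1 \in S -> s2 \in S -> eT u s1 -> eT u s2 -> s1 = s2.
Proof.
move=> sym acy cS uS s1S s2S e1 e2.
apply/eqP; apply/negPn/negP => ne.
have := cS _ _ s1S s2S.
case/connectP => p0 pth0 l0.
move: l0; case: (shortenP pth0) => p pth uq _ l0.
apply: acy; exists (u :: s1 :: p).
have allS := path_eS_all pth.
have pthT : path eT s1 p.
  by apply: sub_path pth => a b /and3P[].
apply/and3P; split.
- rewrite cons_uniq uq andbT in_cons negb_or.
  apply/andP; split.
    by apply/negP => /eqP h; rewrite h s1S in uS.
  apply/negP => up; move/allP: allS => /(_ u up) /=.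
  by rewrite (negbTE uS).
- case: p {pth uq allS pthT} l0 => [|a p] /= l0; last by [].
  by rewrite -l0 eqxx in ne.
- rewrite /= e1 rcons_path pthT /= -l0 sym e2.
  done.
Qed.

Lemma connS_add (U : finType) (eT : rel U) (S : {set U}) u s :
  symmetric eT -> connS eT S -> s \in S -> eT s u -> connS eT (u |: S).
Proof.
move=> sym cS sS esu.
have sub : forall x y, connect (eS eT S) x y -> connect (eS eT (u |: S)) x y.
  apply: connect_sub => x y /and3P[xS yS exy]; apply: connect1.
  by rewrite /eS /= !in_setU1 xS yS exy !orbT.
have us : connect (eS eT (u |: S)) u s.
  by apply: connect1; rewrite /eS /= !in_setU1 eqxx sS orbT sym esu.
have su : connect (eS eT (u |: S)) s u.
  by apply: connect1; rewrite /eS /= !in_setU1 eqxx sS orbT esu.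
move=> x y; rewrite !in_setU1 => /orP[/eqP->|xS] /orP[/eqP->|yS].
- exact: connect0.
- exact: connect_trans us (sub _ _ (cS _ _ sS yS)).
- exact: connect_trans (sub _ _ (cS _ _ xS sS)) su.
- exact: sub (cS _ _ xS yS).
Qed.

Lemma exists_notin (U : finType) (S : {set U}) : S != setT -> exists x, x \notin S.
Proof.
move=> h; apply/existsP; apply: contraR h; rewrite negb_exists => /forallP h.
by apply/eqP/setP => x; rewrite inE; move: (h x); rewrite negbK.
Qed.

Lemma pure_growth (U : finType) (eT : rel U) :
  symmetric eT -> irreflexive eT -> acyclic_graph eT -> connected_graph eT ->
  forall n (S : {set U}) (ES : {set {set U}}) r, #|~: S| = n -> r \in S -> connS eT S ->
  ES \subset edge_set eT -> (forall A, A \in ES -> A \subset S) -> #|ES|.+1 = #|S| ->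
  #|U| <= (nedges eT).+1 /\
  (S != setT -> exists l p, eT l p /\ forall y, eT l y -> y = p).
Proof.
move=> sym irr acy con; elim=> [|n IH] S ES r cS rS cnS sub subS cardE.
  have ST : S = setT.
    apply/setP => x; rewrite inE; apply/negPn/negP => xS.
    have : x \in ~: S by rewrite inE.
    by move/eqP: cS; rewrite cards_eq0 => /eqP ->; rewrite inE.
  split; last by rewrite ST eqxx.
  rewrite -cardsT -ST -cardE ltnS /nedges.
  exact: subset_leq_card.
have [x xS] : exists x, x \notin S.
  apply: exists_notin; apply/negP => /eqP ST.
  by move: cS; rewrite ST setCT cards0.
have [y [z [yS zS eyz]]] := frontier rS xS (con r x).
have yz : y != z by apply/negP => /eqP h; rewrite h irr in eyz.
have Ein : [set y; z] \in edge_set eT.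
  rewrite inE; apply/existsP; exists y; apply/existsP; exists z.
  by rewrite yz eyz eqxx.
have EnES : [set y; z] \notin ES.
  apply/negP => /subS /subsetP /(_ z); rewrite !inE eqxx orbT => /(_ isT).
  by rewrite (negbTE zS).
have H1 : #|~: (z |: S)| = n.
  move: cS; rewrite setCU (cardsD1 z (~: S)) inE zS add1n => -[<-].
  by rewrite setIC -setDE.
have H2 : r \in z |: S by rewrite in_setU1 rS orbT.
have H3 : connS eT (z |: S) by exact: connS_add sym cnS yS eyz.
have H4 : [set y; z] |: ES \subset edge_set eT by rewrite subUset sub1set Ein sub.
have H5 : forall A, A \in [set y; z] |: ES -> A \subset z |: S.
  move=> A; rewrite in_setU1 => /orP[/eqP->|/subS AS].
    apply/subsetP => w; rewrite !inE => /orP[/eqP->|/eqP->].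
      by rewrite yS orbT.
    by rewrite eqxx.
  by apply: subset_trans AS (subsetUr _ _).
have H6 : #|[set y; z] |: ES|.+1 = #|z |: S|.
  rewrite cardsU1 EnES cardsU1 zS -cardE. done.
have [h1 h2] := IH (z |: S) ([set y; z] |: ES) r H1 H2 H3 H4 H5 H6.
split=> // _.
case: (boolP (z |: S == setT)) => [/eqP zST|]; last exact: h2.
exists z, y; split; first by rewrite sym.
move=> w ezw.
have wS : w \in S.
  have : w \in z |: S by rewrite zST inE.
  rewrite in_setU1 => /orP[/eqP wz|//].
  by rewrite wz irr in ezw.
have cnS' := cnS.
exact: uniq_parent sym acy cnS zS wS yS ezw (eqbLR (sym _ _) eyz).
Qed.

Lemma pick_free (U V : finType) (e : rel V) (W : {set V}) (S : {set U}) (f : U -> V) y :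
  irreflexive e -> {in S &, injective f} -> y \in S ->
  #|S| <= #|[set w in W | e (f y) w]| ->
  exists w, [/\ w \in W, e (f y) w & w \notin f @: S].
Proof.
move=> irr inj yS cnt.
have : ~~ ([set w in W | e (f y) w] \subset f @: S :\ f y).
  apply/negP => /subset_leq_card.
  have := cardsD1 (f y) (f @: S); rewrite imset_f // card_in_imset //.
  lia.
case/subsetPn => w; rewrite !inE => /andP[wW ew].
rewrite negb_and negbK => /orP[/eqP wy|wS].
  by rewrite wy irr in ew.
by exists w.
Qed.

Lemma embed (U V : finType) (eT : rel U) (e : rel V) (W : {set V}) (k : nat) l p v :
  symmetric eT -> irreflexive eT -> acyclic_graph eT -> connected_graph eT ->
  symmetric e -> irreflexive e ->
  #|U| <= k.+2 -> (forall y, eT l y -> y = p) -> eT l p ->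
  (forall x, x \in W -> k <= #|[set y in W | e x y]|) ->
  v \in W -> k < #|[set y in W | e v y]| ->
  forall n (S : {set U}) (f : U -> V), #|~: S| = n -> p \in S -> l \notin S -> connS eT S ->
  {in S &, injective f} -> (forall x, x \in S -> f x \in W) ->
  (forall x y, x \in S -> y \in S -> eT x y -> e (f x) (f y)) -> f p = v ->
  exists g : U -> V, injective g /\ (forall x y, eT x y -> e (g x) (g y)).
Proof.
move=> symT irrT acy con sym irr cardU leaf elp degW vW degv.
elim=> [|n IH] S f cS pS lS cnS inj fW fE fp.
  have : l \in ~: S by rewrite inE.
  by move/eqP: cS; rewrite cards_eq0 => /eqP ->; rewrite inE.
case: (pickP (fun x => (x \notin S) && (x != l))) => [x /andP[xS xl]|none].
  have pA : p \in l |: S by rewrite in_setU1 pS orbT.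
  have xA : x \notin l |: S by rewrite in_setU1 negb_or xl xS.
  have [y [z [yS zS eyz]]] := frontier pA xA (con p x).
  move: yS zS; rewrite !in_setU1 negb_or => /orP[/eqP yl|yS] /andP[zl zS].
    by rewrite yl in eyz; move: (leaf _ eyz) => zp; rewrite zp pS in zS.
  have cntS : #|S| <= #|[set w in W | e (f y) w]|.
    apply: leq_trans (degW _ (fW _ yS)).
    have : [set z; l] \subset ~: S.
      by apply/subsetP => a; rewrite !inE => /orP[/eqP->|/eqP->]; rewrite ?zS ?lS.
    move/subset_leq_card; rewrite cards2 zl.
    have := cardsC S; lia.
  have [w [wW ew wS]] := pick_free irr inj yS cntS.
  pose f' := fun a => if a == z then w else f a.
  have zne : forall a, a \in S -> (a == z) = false.
    by move=> a aS; apply/negP => /eqP h; rewrite -h aS in zS.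
  have ezS : forall a, a \in S -> eT z a -> a = y.
    move=> a aS eza.
    have cnS' := cnS.
    exact: uniq_parent symT acy cnS zS aS yS eza (eqbLR (symT _ _) eyz).
  apply: (IH (z |: S) f').
  - move: cS; rewrite setCU (cardsD1 z (~: S)) inE zS add1n => -[<-].
    by rewrite setIC -setDE.
  - by rewrite in_setU1 pS orbT.
  - by rewrite in_setU1 negb_or lS andbT eq_sym.
  - exact: connS_add symT cnS yS eyz.
  - move=> a b; rewrite !in_setU1 /f' => /orP[/eqP->|aS] /orP[/eqP->|bS];
      rewrite ?eqxx ?zne //.
    + by move=> h; rewrite h imset_f in wS.
    + by move=> h; rewrite -h imset_f in wS.
    + exact: inj.
  - by move=> a; rewrite in_setU1 /f' => /orP[/eqP->|aS]; rewrite ?eqxx ?zne // fW.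
  - move=> a b; rewrite !in_setU1 /f' => /orP[/eqP->|aS] /orP[/eqP->|bS];
      rewrite ?eqxx ?zne //.
    + by rewrite irrT.
    + by move=> /(ezS _ bS) ->; rewrite sym.
    + by rewrite symT => /(ezS _ aS) ->.
    + exact: fE.
  - by rewrite /f' zne.
have lastS : forall a, a \notin S -> a = l.
  by move=> a aS; move: (none a); rewrite aS /= => /negbFE/eqP.
have cntS : #|S| <= #|[set w in W | e (f p) w]|.
  rewrite fp; apply: leq_trans degv.
  have : [set l] \subset ~: S by rewrite sub1set inE.
  move/subset_leq_card; rewrite cards1.
  have := cardsC S; lia.
have [w [wW ew wS]] := pick_free irr inj pS cntS.
pose g := fun a => if a == l then w else f a.
have lne : forall a, a \in S -> (a == l) = false.
  by move=> a aS; apply/negP => /eqP h; rewrite -h aS in lS.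
have inS : forall a, a != l -> a \in S.
  by move=> a al; apply/negPn/negP => /lastS h; rewrite h eqxx in al.
exists g; split.
  move=> a b; rewrite /g.
  case: (boolP (a == l)) => [/eqP->|al]; case: (boolP (b == l)) => [/eqP->|bl] //.
  + by move=> h; rewrite h imset_f ?inS in wS.
  + by move=> h; rewrite -h imset_f ?inS in wS.
  + exact: inj (inS _ al) (inS _ bl).
move=> a b; rewrite /g.
case: (boolP (a == l)) => [/eqP->|al]; case: (boolP (b == l)) => [/eqP->|bl] //.
+ by rewrite irrT.
+ by move=> /leaf ->; rewrite sym.
+ by rewrite symT => /leaf ->.
+ exact: fE (inS _ al) (inS _ bl).
Qed.

Definition degW (V : finType) (e : rel V) (W : {set V}) x := \sum_(y in W) (e x y : nat).
Definition mW (V : finType) (e : rel V) (W : {set V}) := \sum_(a in W) degW e W a.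

Lemma degW_card (V : finType) (e : rel V) (W : {set V}) x :
  degW e W x = #|[set y in W | e x y]|.
Proof.
rewrite /degW -sum1_card big_mkcond /= [RHS]big_mkcond /=.
by apply: eq_bigr => y _; rewrite inE; case: (y \in W); case: (e x y).
Qed.

Lemma mW_D1 (V : finType) (e : rel V) (W : {set V}) x :
  symmetric e -> irreflexive e -> x \in W ->
  mW e W = mW e (W :\ x) + 2 * degW e W x.
Proof.
move=> sym irr xW.
have hD : forall (F : V -> nat), \sum_(a in W) F a = F x + \sum_(a in W :\ x) F a.
  move=> F; rewrite (bigD1 x) //=; congr (_ + _).
  by apply: eq_bigl => a; rewrite in_setD1 andbC.
rewrite /mW hD.
have h2 : forall a, a \in W :\ x -> degW e W a = (e a x : nat) + degW e (W :\ x) a.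
  by move=> a _; rewrite /degW hD.
rewrite (eq_bigr _ h2) big_split /=.
have h3 : \sum_(a in W :\ x) (e a x : nat) = degW e W x.
  rewrite /degW hD irr add0n; apply: eq_bigr => a _; by rewrite sym.
rewrite h3; lia.
Qed.

Lemma two_edges (V : finType) (e : rel V) :
  symmetric e -> irreflexive e -> 2 * nedges e <= mW e setT.
Proof.
move=> sym irr.
have -> : mW e setT = \sum_(p : V * V | e p.1 p.2) 1.
  rewrite /mW /degW.
  rewrite (eq_bigl (fun _ => true)); last by move=> a; rewrite inE.
  rewrite (eq_bigr (fun a => \sum_(b : V) (e a b : nat))); last first.
    by move=> a _; apply: eq_bigl => b; rewrite inE.
  rewrite pair_big /= [RHS]big_mkcond /=.
  by apply: eq_bigr => -[a b] _ /=; case: (e a b).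
rewrite (partition_big (fun p : V * V => [set p.1; p.2]) (mem (edge_set e))); last first.
  move=> [a b] /= eab; rewrite inE; apply/existsP; exists a; apply/existsP; exists b.
  rewrite eab eqxx /= andbT; apply/eqP => h; by rewrite h irr in eab.
rewrite /nedges mulnC -sum_nat_const; apply: leq_sum => A.
rewrite inE => /existsP[x /existsP[y /and3P[xy exy /eqP AE]]].
rewrite sum1dep_card.
have -> : 2 = #|[set (x, y); (y, x)]|.
  by rewrite cards2 xpair_eqE negb_and xy.
apply: subset_leq_card; apply/subsetP => -[a b]; rewrite !inE /=.
case/orP => /eqP [-> ->]; rewrite AE ?exy ?eqxx //.
by rewrite sym exy setUC eqxx.
Qed.

Local Open Scope ring_scope.
Lemma find_W (V : finType) (e : rel V) (c : rat) (k : nat) :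
  symmetric e -> irreflexive e ->
  2 * c * #|V|%:R < (mW e setT)%:R ->
  k%:R - 1 <= c -> k%:R <= 2 * c ->
  exists (W : {set V}) (v : V), [/\ forall x, x \in W -> (k <= degW e W x)%N, v \in W & (k < degW e W v)%N].
Proof.
move=> sym irr hT hb hc.
pose P := fun W : {set V} => (2 * c * #|W|%:R < (mW e W)%:R :> rat).
have PT : P setT by rewrite /P cardsT.
case: (@arg_minnP _ setT P (fun W : {set V} => #|W|) PT) => W PW minW.
have degk : forall x, x \in W -> (k <= degW e W x)%N.
  move=> x xW; rewrite leqNgt; apply/negP => dlt.
  have : P (W :\ x).
    rewrite /P; move: PW; rewrite /P (mW_D1 sym irr xW) (cardsD1 x W) xW !natrD /= ?mulr1n.
    have h1 : ((degW e W x) + 1)%:R <= k%:R :> rat by rewrite ler_nat addn1.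
    rewrite natrD ?mulr1n in h1.
    move=> h2.
    lra.
  move/minW; rewrite (cardsD1 x W) xW; lia.
case: (pickP (fun x => (x \in W) && (k < degW e W x)%N)) => [v /andP[vW kv]|none].
  by exists W, v.
exfalso.
have hle : (mW e W <= #|W| * k)%N.
  rewrite /mW -sum_nat_const; apply: leq_sum => x xW.
  by move: (none x); rewrite xW /= => /negbT; rewrite -leqNgt.
have : (mW e W)%:R <= #|W|%:R * k%:R :> rat by rewrite -natrM ler_nat.
move: PW; rewrite /P => h1 h2.
have h3 : 0 <= #|W|%:R :> rat by [].
nra.
Qed.

Lemma cbounds (a k : nat) : (0 < a)%N -> (k <= a)%N -> (k = 0 \/ 2 <= a)%N ->
  k%:R - 1 <= (1 - 1 / a%:R) * k%:R :> rat /\ k%:R <= 2 * ((1 - 1 / a%:R) * k%:R) :> rat.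
Proof.
move=> a0 ka k2.
have hA : 0 < a%:R :> rat by rewrite ltr0n.
set A := a%:R : rat in hA *.
have hq : 1 / A * A = 1 by rewrite mul1r mulVf // gt_eqF.
have q0 : 0 <= 1 / A by rewrite divr_ge0 // ltW.
set q := 1 / A in hq q0 *.
have kA : k%:R <= A by rewrite /A ler_nat.
have k0 : 0 <= k%:R :> rat by [].
split.
  have : q * k%:R <= q * A by rewrite ler_wpM2l.
  lra.
case: k2 => [->|a2].
  by rewrite mulr0 mulr0.
have : 2 <= A by rewrite /A (ler_nat _ 2).
move=> A2.
have : q * 2 <= q * A by rewrite ler_wpM2l.
move=> h.
nra.
Qed.

Lemma connS1 (U : finType) (eT : rel U) r : connS eT [set r].
Proof. by move=> x y; rewrite !inE => /eqP-> /eqP->; exact: connect0. Qed.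
Local Close Scope ring_scope.

Theorem proposition4p2 (t : nat) (V : finType) (e : rel V) :
  (0 < t)%N ->
  simple_graph e ->
  (if odd t then
     ((1 - 1 / (t.+1)%:R) * (t.-1)%:R * (#|V|)%:R < (nedges e)%:R :> rat)%R
   else
     ((1 - 1 / t%:R) * (t.-1)%:R * (#|V|)%:R < (nedges e)%:R :> rat)%R) ->
  forall (U : finType) (eT : rel U),
    is_tree eT -> nedges eT = t -> contains_subgraph e eT.
Proof.
move=> t0 [sym irr] H U eT [[symT irrT] U0 conT acyT] nT.
case: t t0 H nT => // k _ H nT.
have [c0 [Hc hb hc]] : exists c0 : rat,
   [/\ (c0 * k%:R * #|V|%:R < (nedges e)%:R)%R,
       (k%:R - 1 <= c0 * k%:R)%R & (k%:R <= 2 * (c0 * k%:R))%R].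
  move: H; case: ifP => odk H.
    have ka : (k <= k.+2)%N by lia.
    have [h1 h2] := cbounds (a := k.+2) (k := k) isT ka (or_intror isT).
    by exists (1 - 1 / (k.+2)%:R)%R.
  have k1 : (0 < k)%N by case: (posnP k) => // k0; rewrite k0 in odk.
  have [h1 h2] := cbounds (a := k.+1) (k := k) isT (leqnSn _) (or_intror k1).
  by exists (1 - 1 / (k.+1)%:R)%R.
have hT : (2 * (c0 * k%:R) * #|V|%:R < (mW e setT)%:R)%R.
  have := two_edges sym irr; rewrite -(ler_nat rat) natrM => h.
  have h0 : (0 <= c0 * k%:R)%R.
    have : (0 <= k%:R :> rat)%R by [].
    lra.
  lra.
have [W [v [degk vW kv]]] := find_W sym irr hT hb hc.
have : (0 < #|edge_set eT|)%N by rewrite -/(nedges eT) nT.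
case/card_gt0P => A; rewrite inE => /existsP[x /existsP[y /and3P[xy exy _]]].
have E0 : forall A : {set U}, A \in (set0 : {set {set U}}) -> A \subset [set x].
  by move=> B; rewrite inE.
have E1 : #|(set0 : {set {set U}})|.+1 = #|[set x]| by rewrite cards0 cards1.
have [cU leafP] := pure_growth symT irrT acyT conT (erefl #|~: [set x]|) (set11 _)
  (@connS1 _ eT x) (sub0set _) E0 E1.
have [l [p [elp leaf]]] : exists l p, eT l p /\ forall y, eT l y -> y = p.
  apply: leafP; apply/negP => /eqP h.
  have : y \in [set x] by rewrite h inE.
  by rewrite inE eq_sym (negbTE xy).
rewrite nT in cU.
have lp : l \notin [set p].
  by rewrite inE; apply/negP => /eqP h; rewrite h irrT in elp.
apply: (embed (W := W) (k := k) (v := v) symT irrT acyT conT sym irr cU leaf elp _ vW _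
   (erefl #|~: [set p]|) (set11 _) lp (@connS1 _ eT p) (f := fun _ => v)).
- by move=> z zW; rewrite -degW_card degk.
- by rewrite -degW_card.
- by move=> a b; rewrite !inE => /eqP-> /eqP->.
- by move=> a _.
- by move=> a b; rewrite !inE => /eqP-> /eqP->; rewrite irrT.
- by [].
Qed.
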